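(* If a commutative ring $R$ has almost stable range 1, then $R$ is locally stable.
   Context: All rings are commutative with identity. A ring $S$ has stable range 1 if whenever $aS+bS=S$ there is $y\in S$ with $a+by$ a unit. $R$ has almost stable range 1 if every proper homomorphic image $R/I$ with $I\neq 0$ has stable range 1. $R$ is locally stable if whenever $a,b\in R$ with $aR+bR=R$ there is $y\in R$ such that $R/(a+by)R$ has stable range 1. *)

(* Defs.v *)
From mathcomp Require Import all_boot all_algebra.
Set Implicit Arguments. Unset Strict Implicit. Unset Printing Implicit Defensive.
Import GRing.Theory.
Local Open Scope ring_scope.

(* Commutative rings with identity (the zero ring allowed): comPzRingType.
   Ideals are Prop-valued predicates; the quotient R/I is handled by working
   modulo I in R ("x = y in R/I" is "x - y \in I"). *)

Definition is_ideal (R : comPzRingType) (I : R -> Prop) : Prop :=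
  [/\ I 0,
      (forall x y, I x -> I y -> I (x + y)) &
      (forall r x, I x -> I (r * x))].

Definition principal (R : comPzRingType) (c : R) : R -> Prop :=
  fun r => exists t, r = c * t.

Definition unit_mod (R : comPzRingType) (I : R -> Prop) (x : R) : Prop :=
  exists z, I (x * z - 1).

(* R/I has stable range 1: whenever aS + bS = S in S = R/I (i.e. a x + b y = 1
   modulo I for some x, y), there is y with a + b y a unit of R/I.
   (Every element of R/I is the class of some element of R.) *)
Definition sr1_mod (R : comPzRingType) (I : R -> Prop) : Prop :=
  forall a b : R, (exists x y, I (a * x + b * y - 1)) ->
    exists y, unit_mod I (a + b * y).

Definition stable_range1 (R : comPzRingType) : Prop :=
  forall a b : R, (exists x y, a * x + b * y = 1) ->
    exists y, exists z, (a + b * y) * z = 1.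

Definition almost_sr1 (R : comPzRingType) : Prop :=
  forall I : R -> Prop, is_ideal I -> (exists x, I x /\ x <> 0) -> sr1_mod I.

Definition locally_stable (R : comPzRingType) : Prop :=
  forall a b : R, (exists x y, a * x + b * y = 1) ->
    exists y, sr1_mod (principal (a + b * y)).

(* Main.v *)
Require Import Defs.
From mathcomp Require Import all_boot all_algebra.
Import GRing.Theory.
Local Open Scope ring_scope.

Lemma principal_ideal (R : comPzRingType) (c : R) : is_ideal (principal c).
Proof.
split.
- by exists 0; rewrite mulr0.
- by move=> x y [t ->] [s ->]; exists (t + s); rewrite mulrDr.
- by move=> r x [t ->]; exists (r * t); rewrite mulrCA.
Qed.

Lemma principal_sr1 (R : comPzRingType) (c : R) :
  almost_sr1 R -> c != 0 -> sr1_mod (principal c).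
Proof.
move=> H Hc; apply: H; first exact: principal_ideal.
by exists c; split; [exists 1; rewrite mulr1 | apply/eqP].
Qed.

Theorem corollary2p2 (R : comPzRingType) : almost_sr1 R -> locally_stable R.
Proof.
move=> H a b [x [y Hxy]].
have [a0|an0] := eqVneq a 0.
  have [b0|bn0] := eqVneq b 0.
    have z : forall r : R, r = 0.
      by move=> r; rewrite -[r]mulr1 -Hxy a0 b0 !mul0r addr0 mulr0.
    exists 0 => u v _; exists 0; exists 0; exists 0.
    by rewrite (z ((u + v * 0) * 0 - 1)) (z ((a + b * 0) * 0)).
  exists 1; apply: principal_sr1 => //; by rewrite a0 add0r mulr1.
exists 0; apply: principal_sr1 => //; by rewrite mulr0 addr0.
Qed.
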